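(* Let $\mu>1$ and $0<\nu<1$ be constants satisfying $\mu\nu>1$ and $1+\frac{1}{\mu}\le \nu+\nu^2$. Then the algorithm $1$-SORT (with any fixed rule for breaking ties between equal priorities) is $\rho$-competitive for the problem $1\mid t_j\mid \sum C_j$ with obligatory tests, where \[ \rho=\max\Biggl\{\frac{\nu+\nu^2+2+\frac{2}{\mu}}{\nu+\nu^2+1+\frac{1}{\mu}},\ 1+\frac{1}{2+\nu},\ \frac{\frac{4}{\nu}+\frac{4}{\mu\nu}+\nu+\nu^2+1}{\frac{2}{\nu}+\frac{2}{\mu\nu}+\nu+\nu^2},\ \frac{\frac{4}{\nu}+\frac{4}{\nu\mu}+\nu+\frac{1}{\mu+1}}{\frac{2}{\nu}+\frac{2}{\mu\nu}+\nu},\ \frac{4+\frac{5}{\mu}+\nu}{2+\frac{2}{\mu}+\nu},\ 1+\frac{1}{\nu+\nu^2},\ 1+\frac{1}{\nu(\mu+1)},\ \frac{2\mu+1}{\mu+1},\ 1+\nu\Biggr\}. \]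
   Context: Scheduling with obligatory tests: a set $J=\{1,\dots,n\}$ of jobs is to be scheduled on a single machine. Each job $j$ has a test time $t_j\ge 0$, known in advance, and a processing time $p_j\ge 0$, which is unknown to the algorithm until the test of $j$ has been executed. Each job consists of two operations: its test (duration $t_j$) and its processing part (duration $p_j$); the processing part can be executed at any time after the test has completed (not necessarily immediately). The machine executes at most one operation at a time, and each operation is executed without preemption. The completion time $C_j$ of job $j$ is the time at which its processing part finishes; the objective is to minimize $\sum_j C_j$. The offline optimum $\mathit{OPT}$ knows all $p_j$ but must also execute all tests. An algorithm is $\rho$-competitive if its objective value $\mathit{ALG}$ satisfies $\mathit{ALG}\le\rho\cdot\mathit{OPT}$ for every instance. Algorithm $\beta$-SORT (parameter $\beta>0$): maintain a priority queue of available operations, initially containing the test of every job $j$ with priority $\beta t_j$. Repeatedly remove an operation of minimum priority and execute it immediately (starting when the previous operation finishes); whenever the executed operation is the test of job $j$, insert the processing part of $j$ with priority $p_j$ into the queue. $1$-SORT is $\beta$-SORT with $\beta=1$. *)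

(* Defs.v *)
From HB Require Import structures.
From mathcomp Require Import all_boot all_order all_algebra.
From mathcomp Require Import reals.
Set Implicit Arguments.
Unset Strict Implicit.
Unset Printing Implicit Defensive.
Import Order.TTheory GRing.Theory Num.Theory.
Local Open Scope ring_scope.

(* An operation of job j : 'I_n is (j, false) = its test, (j, true) = its
   processing part. *)
Definition op (n : nat) := ('I_n * bool)%type.

Section Sched.
Variables (R : realType) (n : nat) (t p : 'I_n -> R).

Definition dur (o : op n) : R := if o.2 then p o.1 else t o.1.

Definition prio (beta : R) (o : op n) : R := if o.2 then p o.1 else beta * t o.1.

Definition available (done : seq (op n)) (o : op n) : bool :=
  (o \notin done) && (~~ o.2 || ((o.1, false) \in done)).

(* s is a possible execution order of beta-SORT, for some tie-breaking rule:
   it contains every operation exactly once, and at every step the executed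
   operation is in the queue and has minimum priority among queued ones. *)
Definition beta_sort_run (beta : R) (s : seq (op n)) : Prop :=
  uniq s /\ (forall o : op n, o \in s) /\
  forall k, (k < size s)%N ->
    forall o0 : op n,
    let done := take k s in
    let o := nth o0 s k in
    available done o /\
    forall o', available done o' -> prio beta o <= prio beta o'.

(* operations are executed back to back starting at time 0; completion time
   of operation o in the order s *)
Definition run_completion (s : seq (op n)) (o : op n) : R :=
  \sum_(o' <- take (index o s).+1 s) dur o'.

Definition run_cost (s : seq (op n)) : R :=
  \sum_(j < n) run_completion s (j, true).

(* The machine executes at most one operation at a time (the half-open
   execution intervals are pairwise disjoint), no preemption, processing of j
   starts after its test completes. *)
Definition feasible_schedule (S : op n -> R) : Prop :=
  (forall o, 0 <= S o) /\
  (forall j : 'I_n, S (j, false) + t j <= S (j, true)) /\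
  (forall a b : op n, a != b ->
     [\/ S a + dur a <= S b, S b + dur b <= S a, dur a = 0 | dur b = 0]).

Definition schedule_cost (S : op n -> R) : R :=
  \sum_(j < n) (S (j, true) + p j).

End Sched.

Definition rho (R : realType) (mu nu : R) : R :=
  let nu2 := nu ^+ 2 in
  Num.max ((nu + nu2 + 2 + 2 / mu) / (nu + nu2 + 1 + 1 / mu))
  (Num.max (1 + 1 / (2 + nu))
  (Num.max ((4 / nu + 4 / (mu * nu) + nu + nu2 + 1) / (2 / nu + 2 / (mu * nu) + nu + nu2))
  (Num.max ((4 / nu + 4 / (nu * mu) + nu + 1 / (mu + 1)) / (2 / nu + 2 / (mu * nu) + nu))
  (Num.max ((4 + 5 / mu + nu) / (2 + 2 / mu + nu))
  (Num.max (1 + 1 / (nu + nu2))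
  (Num.max (1 + 1 / (nu * (mu + 1)))
  (Num.max ((2 * mu + 1) / (mu + 1))
           (1 + nu)))))))).

(* Main.v *)
Require Import Defs.
From HB Require Import structures.
From mathcomp Require Import all_boot all_order all_algebra.
From mathcomp Require Import reals.
From mathcomp Require Import ring lra zify.
From Stdlib Require Import Lia.
Import Order.TTheory GRing.Theory Num.Theory.
Local Open Scope ring_scope.

Lemma rho_ge (R : realType) (mu nu : R) (hmu : 1 < mu) (hnu0 : 0 < nu) :
  46/25 <= rho mu nu.
Proof.
have [hn|hn] := leP (21/25) nu.
  have H : 46/25 <= 1 + nu by lra.
  by rewrite /rho !le_max H !orbT.
have H : 46/25 <= (4 / nu + 4 / (mu * nu) + nu + nu^+2 + 1) /
                  (2 / nu + 2 / (mu * nu) + nu + nu^+2).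
  have hm0 : 0 < mu by lra.
  have hQ : 2 / nu <= 2 / nu + 2 / (mu * nu).
    rewrite lerDl; apply: divr_ge0 => //; apply: mulr_ge0; lra.
  have h2 : 0 < 2 / nu by apply: divr_gt0.
  have E : 4 / nu + 4 / (mu * nu) = 2 * (2 / nu + 2 / (mu * nu)) by field; apply/andP; split; rewrite gt_eqF //; apply: mulr_gt0.
  rewrite E.
  set Q := 2 / nu + 2 / (mu * nu) in hQ *.
  have hnu2 : 0 <= nu ^+ 2 by apply: sqr_ge0.
  rewrite ler_pdivlMr; last by lra.
  have key : 21/25 * (nu + nu^+2) <= 1 + 4/25 * (2 / nu).
    have hi : nu * nu^-1 = 1 by rewrite mulfV // gt_eqF.
    have hi0 : 0 < nu^-1 by rewrite invr_gt0.
    rewrite expr2.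
    nra.
  lra.
by rewrite /rho !le_max H !orbT.
Qed.
Section Core.
Variables (R : realType) (n : nat) (lo : 'I_n -> 'I_n -> bool).
Hypothesis lo_irr : forall i, lo i i = false.
Hypothesis lo_asym : forall i j, lo i j -> lo j i = false.

Definition Lf (t p : 'I_n -> R) : R :=
  \sum_i (t i + p i) + \sum_i \sum_j (Num.min (t i) (t j) + Num.min (p i) (p j)
     + 2 * ((lo i j)%:R * Num.min (t j) (p i))).
Definition Rf (t p : 'I_n -> R) : R :=
  \sum_i (t i + p i) + \sum_i \sum_j (3/4 * (Num.min (t i) (t j) + Num.min (p i) (p j))
     + 1/4 * Num.min (Num.max (t i) (p i)) (Num.max (t j) (p j))).

Lemma minb (x y : bool) : Num.min (x%:R : R) y%:R = (x && y)%:R.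
Proof. by case: x; case: y; rewrite /= minEle ?lexx ?ler01 ?ler10. Qed.
Lemma maxb (x y : bool) : Num.max (x%:R : R) y%:R = (x || y)%:R.
Proof. by case: x; case: y; rewrite /= maxEle ?lexx ?ler01 ?ler10. Qed.

Lemma sum_sq (f : 'I_n -> R) : \sum_i \sum_j (f i * f j) = (\sum_i f i) ^+ 2.
Proof. by rewrite expr2 mulr_suml; apply: eq_bigr => i _; rewrite mulr_sumr. Qed.

Lemma sum_diag (f : 'I_n -> R) : \sum_i \sum_j ((i == j)%:R * f i) = \sum_i f i.
Proof.
apply: eq_bigr => i _; rewrite (bigD1 i) //= eqxx mul1r big1 ?addr0 //.
by move=> j /negbTE; rewrite eq_sym => ->; rewrite mul0r.
Qed.

Lemma bR (b : bool) : (b%:R : R) * b%:R = b%:R.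
Proof. by case: b; rewrite ?mul1r ?mul0r. Qed.

Lemma base (bt bp : 'I_n -> bool) :
  Lf (fun i => (bt i)%:R) (fun i => (bp i)%:R) <=
  46/25 * Rf (fun i => (bt i)%:R) (fun i => (bp i)%:R).
Proof.
rewrite /Lf /Rf.
set a := \sum_i ((bt i && bp i)%:R : R).
set b := \sum_i ((~~ bt i && bp i)%:R : R).
set c := \sum_i ((bt i && ~~ bp i)%:R : R).
have ha : 0 <= a by apply: sumr_ge0 => i _; apply: ler0n.
have hb : 0 <= b by apply: sumr_ge0 => i _; apply: ler0n.
have hc : 0 <= c by apply: sumr_ge0 => i _; apply: ler0n.
have sT : \sum_i ((bt i)%:R : R) = a + c.
  rewrite -big_split; apply: eq_bigr => i _; by case: (bt i); case: (bp i); rewrite /= ?addr0 ?add0r.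
have sP : \sum_i ((bp i)%:R : R) = a + b.
  rewrite -big_split; apply: eq_bigr => i _; by case: (bt i); case: (bp i); rewrite /= ?addr0 ?add0r.
have sU : \sum_i ((bt i || bp i)%:R : R) = a + b + c.
  rewrite -!big_split; apply: eq_bigr => i _; by case: (bt i); case: (bp i); rewrite /= ?addr0 ?add0r.
have E1 : \sum_i ((bt i)%:R + (bp i)%:R : R) = 2 * a + b + c.
  by rewrite big_split /= sT sP; lra.
have sqT : \sum_i \sum_j Num.min ((bt i)%:R : R) (bt j)%:R = (a + c) ^+ 2.
  rewrite -sT -sum_sq; apply: eq_bigr => i _; apply: eq_bigr => j _.
  by rewrite minb -mulnb natrM.
have sqP : \sum_i \sum_j Num.min ((bp i)%:R : R) (bp j)%:R = (a + b) ^+ 2.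
  rewrite -sP -sum_sq; apply: eq_bigr => i _; apply: eq_bigr => j _.
  by rewrite minb -mulnb natrM.
have sqU : \sum_i \sum_j Num.min (Num.max ((bt i)%:R : R) (bp i)%:R)
              (Num.max (bt j)%:R (bp j)%:R) = (a + b + c) ^+ 2.
  rewrite -sU -sum_sq; apply: eq_bigr => i _; apply: eq_bigr => j _.
  by rewrite !maxb minb -mulnb natrM.
set H := \sum_i \sum_j ((lo i j)%:R * Num.min ((bt j)%:R : R) (bp i)%:R).
have HH : 2 * H <= (a + b + c) ^+ 2 - b ^+ 2 - c ^+ 2 - a.
  have -> : 2 * H = \sum_i \sum_j ((lo i j)%:R * Num.min ((bt j)%:R : R) (bp i)%:R
                     + (lo j i)%:R * Num.min ((bt i)%:R : R) (bp j)%:R).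
    rewrite mulr2n mulrDl mul1r /H.
    rewrite [X in _ + X = _]exchange_big /= -big_split /=.
    by apply: eq_bigr => i _; rewrite -big_split.
  have -> : (a + b + c) ^+ 2 - b ^+ 2 - c ^+ 2 - a =
     \sum_i \sum_j (((bt i || bp i)%:R * (bt j || bp j)%:R)
                   - ((~~ bt i && bp i)%:R * (~~ bt j && bp j)%:R)
                   - ((bt i && ~~ bp i)%:R * (bt j && ~~ bp j)%:R)
                   - (i == j)%:R * ((bt i && bp i)%:R : R)).
    have Su : (a + b + c) ^+ 2 = \sum_i \sum_j (((bt i || bp i)%:R : R) * (bt j || bp j)%:R)
      by rewrite -sU sum_sq.
    have Sb : b ^+ 2 = \sum_i \sum_j (((~~ bt i && bp i)%:R : R) * (~~ bt j && bp j)%:R)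
      by rewrite sum_sq.
    have Sc : c ^+ 2 = \sum_i \sum_j (((bt i && ~~ bp i)%:R : R) * (bt j && ~~ bp j)%:R)
      by rewrite sum_sq.
    have D : a = \sum_i \sum_j ((i == j)%:R * ((bt i && bp i)%:R : R)) by rewrite sum_diag.
    rewrite Su Sb Sc {}D.
    rewrite -!sumrB; apply: eq_bigr => i _; by rewrite -!sumrB.
  apply: ler_sum => i _; apply: ler_sum => j _.
  have [->|nij] := eqVneq i j.
    rewrite lo_irr.
    by case: (bt j); case: (bp j); rewrite /= ?(mulr0n, mulr1n); lra.
  rewrite !minb.
  have [lij|lij] := boolP (lo i j).
    rewrite (lo_asym _ _ lij).
    by case: (bt i); case: (bp i); case: (bt j); case: (bp j);
       rewrite /= ?(mulr0n, mulr1n); lra.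

  case: (lo j i); case: (bt i); case: (bp i); case: (bt j); case: (bp j);
     rewrite /= ?(mulr0n, mulr1n); lra.
rewrite E1.
have -> : \sum_i \sum_j (Num.min ((bt i)%:R : R) (bt j)%:R + Num.min (bp i)%:R (bp j)%:R +
      2 * ((lo i j)%:R * Num.min (bt j)%:R (bp i)%:R)) =
      (a + c) ^+ 2 + (a + b) ^+ 2 + 2 * H.
  rewrite -sqT -sqP /H mulr_sumr -!big_split; apply: eq_bigr => i _.
  by rewrite mulr_sumr -!big_split.
have -> : \sum_i \sum_j (3/4 * (Num.min ((bt i)%:R : R) (bt j)%:R + Num.min (bp i)%:R (bp j)%:R) +
      1/4 * Num.min (Num.max (bt i)%:R (bp i)%:R) (Num.max (bt j)%:R (bp j)%:R)) =
      3/4 * ((a + c) ^+ 2 + (a + b) ^+ 2) + 1/4 * (a + b + c) ^+ 2.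
  rewrite -sqT -sqP -sqU -big_split mulr_sumr mulr_sumr -big_split; apply: eq_bigr => i _.
  by rewrite -big_split mulr_sumr mulr_sumr -big_split.
move: HH; rewrite !expr2 => HH.
have h1 := sqr_ge0 (11 * a - 8 * (b + c)).
have h2 := sqr_ge0 (b - c).
move: h1 h2; rewrite !expr2 => h1 h2.
nra.
Qed.

Lemma minr_case (x y : R) : (x <= y /\ Num.min x y = x) \/ (y < x /\ Num.min x y = y).
Proof. by rewrite minEle; case: leP => h; [left|right]. Qed.
Lemma maxr_case (x y : R) : (x <= y /\ Num.max x y = y) \/ (y < x /\ Num.max x y = x).
Proof. by rewrite maxEle; case: leP => h; [left|right]. Qed.

Ltac mins := repeat match goal with
  | |- context[Num.min ?x ?y] => let H := fresh "H" in let E := fresh "E" in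
      have [[H E]|[H E]] := minr_case x y; rewrite E; clear E
  | |- context[Num.max ?x ?y] => let H := fresh "H" in let E := fresh "E" in
      have [[H E]|[H E]] := maxr_case x y; rewrite E; clear E
  end.

Definition dec (d x u x' : R) := x = d * u + x' /\ ((u = 0 /\ x' = 0) \/ (u = 1 /\ 0 <= x')).

Lemma dec_min d x y u v x' y' : 0 < d -> dec d x u x' -> dec d y v y' ->
  Num.min x y = d * Num.min u v + Num.min x' y'.
Proof.
move=> hd [-> [[-> ->]|[-> hx]]] [-> [[-> ->]|[-> hy]]]; mins; lra.
Qed.

Arguments dec_min [d x y u v x' y'].
Lemma dec_max d x y u v x' y' : 0 < d -> dec d x u x' -> dec d y v y' ->
  dec d (Num.max x y) (Num.max u v) (Num.max x' y').
Proof.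
move=> hd [-> [[-> ->]|[-> hx]]] [-> [[-> ->]|[-> hy]]]; split; mins;
  (try lra); (try (by left; lra)); (try (by right; lra)).
Qed.

Arguments dec_max [d x y u v x' y'].
Lemma Lf_dec d t p ut up t' p' : 0 < d ->
  (forall i, dec d (t i) (ut i) (t' i)) -> (forall i, dec d (p i) (up i) (p' i)) ->
  Lf t p = d * Lf ut up + Lf t' p'.
Proof.
move=> hd ht hp; rewrite /Lf.
have E1 : \sum_i (t i + p i) = d * \sum_i (ut i + up i) + \sum_i (t' i + p' i).
  rewrite mulr_sumr -big_split /=; apply: eq_bigr => i _.
  by case: (ht i) => -> _; case: (hp i) => -> _; ring.
have E2 : \sum_i \sum_j (Num.min (t i) (t j) + Num.min (p i) (p j) + 2 * ((lo i j)%:R * Num.min (t j) (p i)))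
  = d * \sum_i \sum_j (Num.min (ut i) (ut j) + Num.min (up i) (up j) + 2 * ((lo i j)%:R * Num.min (ut j) (up i)))
    + \sum_i \sum_j (Num.min (t' i) (t' j) + Num.min (p' i) (p' j) + 2 * ((lo i j)%:R * Num.min (t' j) (p' i))).
  rewrite mulr_sumr -big_split /=; apply: eq_bigr => i _.
  rewrite mulr_sumr -big_split /=; apply: eq_bigr => j _.
  rewrite (dec_min hd (ht i) (ht j)) (dec_min hd (hp i) (hp j)) (dec_min hd (ht j) (hp i)).
  ring.
rewrite E1 E2; ring.
Qed.

Lemma Rf_dec d t p ut up t' p' : 0 < d ->
  (forall i, dec d (t i) (ut i) (t' i)) -> (forall i, dec d (p i) (up i) (p' i)) ->
  Rf t p = d * Rf ut up + Rf t' p'.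
Proof.
move=> hd ht hp; rewrite /Rf.
have E1 : \sum_i (t i + p i) = d * \sum_i (ut i + up i) + \sum_i (t' i + p' i).
  rewrite mulr_sumr -big_split /=; apply: eq_bigr => i _.
  by case: (ht i) => -> _; case: (hp i) => -> _; ring.
have E2 : \sum_i \sum_j (3/4 * (Num.min (t i) (t j) + Num.min (p i) (p j))
     + 1/4 * Num.min (Num.max (t i) (p i)) (Num.max (t j) (p j)))
  = d * \sum_i \sum_j (3/4 * (Num.min (ut i) (ut j) + Num.min (up i) (up j))
     + 1/4 * Num.min (Num.max (ut i) (up i)) (Num.max (ut j) (up j)))
    + \sum_i \sum_j (3/4 * (Num.min (t' i) (t' j) + Num.min (p' i) (p' j))
     + 1/4 * Num.min (Num.max (t' i) (p' i)) (Num.max (t' j) (p' j))).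
  rewrite mulr_sumr -big_split /=; apply: eq_bigr => i _.
  rewrite mulr_sumr -big_split /=; apply: eq_bigr => j _.
  rewrite (dec_min hd (ht i) (ht j)) (dec_min hd (hp i) (hp j)).
  rewrite (dec_min hd (dec_max hd (ht i) (hp i)) (dec_max hd (ht j) (hp j))).
  ring.
rewrite E1 E2; ring.
Qed.

Lemma Lf_ext t p t2 p2 : (forall i, t i = t2 i) -> (forall i, p i = p2 i) -> Lf t p = Lf t2 p2.
Proof.
move=> ht hp; rewrite /Lf; congr (_ + _).
  by apply: eq_bigr => i _; rewrite ht hp.
by apply: eq_bigr => i _; apply: eq_bigr => j _; rewrite !ht !hp.
Qed.
Lemma Rf_ext t p t2 p2 : (forall i, t i = t2 i) -> (forall i, p i = p2 i) -> Rf t p = Rf t2 p2.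
Proof.
move=> ht hp; rewrite /Rf; congr (_ + _).
  by apply: eq_bigr => i _; rewrite ht hp.
by apply: eq_bigr => i _; apply: eq_bigr => j _; rewrite !ht !hp.
Qed.

Arguments Lf_ext [t p t2 p2].
Arguments Rf_ext [t p t2 p2].
Arguments Lf_dec [d t p ut up t' p'].
Arguments Rf_dec [d t p ut up t' p'].
Definition Nc (t p : 'I_n -> R) : nat := (\sum_i (nat_of_bool (0 < t i)%R + nat_of_bool (0 < p i)%R))%N.

Lemma zero_case t p : (forall i, t i = 0) -> (forall i, p i = 0) -> Lf t p <= 46/25 * Rf t p.
Proof.
move=> zt zp.
have zt' : forall i, t i = ((fun _ : 'I_n => false) i)%:R by move=> i; rewrite zt.
have zp' : forall i, p i = ((fun _ : 'I_n => false) i)%:R by move=> i; rewrite zp.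
by rewrite (Lf_ext zt' zp') (Rf_ext zt' zp'); apply: base.
Qed.

Lemma dec_ind d x : 0 < d -> 0 <= x -> (0 < x -> d <= x) ->
  dec d x ((0 < x)%R%:R) (x - d * (0 < x)%R%:R).
Proof.
move=> hd hx hdx; split; first by ring.
have [hpos|hnp] := boolP (0 < x).
  by right; rewrite /= mulr1n; split => //; have := hdx hpos; lra.
left; rewrite /= mulr0n; split => //; have -> : x = 0 by apply/eqP; rewrite eq_le hx leNgt (negbTE hnp).
by rewrite mulr0 subr0.
Qed.

Lemma dec_pos d x u x' : 0 < d -> dec d x u x' -> (nat_of_bool (0 < x')%R <= nat_of_bool (0 < x)%R)%N.
Proof.
move=> hd [-> [[-> ->]|[-> hx]]]; first by rewrite ltxx.
have [h|h] := boolP (0 < x'); last by [].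
have -> : 0 < d * 1 + x' by lra.
done.
Qed.

Lemma none_case t p : (forall i, 0 <= t i) -> (forall i, 0 <= p i) ->
  (forall o : 'I_n * bool, (0 < (if o.2 then p o.1 else t o.1)) = false) ->
  Lf t p <= 46/25 * Rf t p.
Proof.
move=> ht hp none; apply: zero_case => i.
  have := none (i, false); rewrite /= => /negbT; rewrite -leNgt => h.
  by apply/eqP; rewrite eq_le h ht.
have := none (i, true); rewrite /= => /negbT; rewrite -leNgt => h.
by apply/eqP; rewrite eq_le h hp.
Qed.

Arguments dec_pos [d x u x'].
Lemma core_ind m : forall t p, (Nc t p <= m)%N -> (forall i, 0 <= t i) -> (forall i, 0 <= p i) ->
  Lf t p <= 46/25 * Rf t p.
Proof.
elim: m => [|m IH] t p Hm ht hp;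
  (set v := fun o : 'I_n * bool => if o.2 then p o.1 else t o.1);
  (have [o0 Ho0|none] := pickP (fun o => 0 < v o)).
- have : (0 < Nc t p)%N.
    rewrite /Nc (bigD1 o0.1) //=; move: Ho0; rewrite /v; case: o0.2 => /= ->; lia.
  by rewrite leqn0 in Hm; rewrite (eqP Hm).
- exact: none_case.
- 
have [o1 Ho1 Hmin] := @arg_minP _ _ _ o0 (fun o => 0 < v o) v Ho0.
move: o1 Ho1 Hmin => [k b] Ho1 Hmin.
set d := v (k, b).
have hd : 0 < d by [].
have dect : forall i, dec d (t i) ((0 < t i)%R%:R) (t i - d * (0 < t i)%R%:R).
  move=> i; apply: dec_ind => // hpos; exact: (Hmin (i, false) hpos).
have decp : forall i, dec d (p i) ((0 < p i)%R%:R) (p i - d * (0 < p i)%R%:R).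
  move=> i; apply: dec_ind => // hpos; exact: (Hmin (i, true) hpos).
set t' := fun i => t i - d * (0 < t i)%R%:R.
set p' := fun i => p i - d * (0 < p i)%R%:R.
have ht' : forall i, 0 <= t' i.
  by move=> i; rewrite /t'; case: (dect i) => _ [[_ ->]|[_ h]].
have hp' : forall i, 0 <= p' i.
  by move=> i; rewrite /p'; case: (decp i) => _ [[_ ->]|[_ h]].
have Hlt : (Nc t' p' < Nc t p)%N.
  rewrite /Nc (bigD1 k) // [X in (_ < X)%N](bigD1 k) //=.
  have Hr : (\sum_(i < n | i != k) (nat_of_bool (0 < t' i)%R + nat_of_bool (0 < p' i)%R) <=
             \sum_(i < n | i != k) (nat_of_bool (0 < t i)%R + nat_of_bool (0 < p i)%R))%N.
    by apply: leq_sum => i _; apply: leq_add; [exact: dec_pos hd (dect i) | exact: dec_pos hd (decp i)].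
  have Hk1 := dec_pos hd (dect k); have Hk2 := dec_pos hd (decp k).
  have Hk : (nat_of_bool (0 < t' k)%R + nat_of_bool (0 < p' k)%R <
             nat_of_bool (0 < t k)%R + nat_of_bool (0 < p k)%R)%N.
    move: Ho1 Hk1 Hk2; rewrite /t' /p' /d /v /=; case Eb: b => /= hpos;
      rewrite hpos /= ?mulr1n mulr1 subrr ltxx /= => h1 h2; lia.
  by apply: leq_ltn_trans (leq_add (leqnn _) Hr) _; rewrite ltn_add2r.
have ih := IH t' p' ltac:(lia) ht' hp'.
rewrite (@Lf_dec d t p _ _ t' p' hd dect decp) (@Rf_dec d t p _ _ t' p' hd dect decp).
have bs := base (fun i => 0 < t i) (fun i => 0 < p i).
have bs' := ler_wpM2l (ltW hd) bs.
apply: (le_trans (lerD bs' ih)); rewrite le_eqVlt; apply/orP; left; apply/eqP; ring.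
- exact: none_case.
Qed.

End Core.
Section Alg.
Variables (R : realType) (n : nat) (t p : 'I_n -> R) (s : seq (op n)).
Hypothesis hs : beta_sort_run t p 1 s.
Hypothesis ht : forall j, 0 <= t j.
Hypothesis hp : forall j, 0 <= p j.

Lemma s_all o : o \in s. Proof. by case: hs => _ []. Qed.

Lemma idx_lt o : (index o s < size s)%N. Proof. by rewrite index_mem s_all. Qed.

Lemma idx_inj x y : index x s = index y s -> x = y.
Proof.
move=> e; have := nth_index x (s_all y); rewrite -e nth_index //; exact: s_all.
Qed.

Lemma prio_le x y : (index x s < index y s)%N ->
  (y.2 -> (index (y.1, false) s < index x s)%N) -> prio t p 1 x <= prio t p 1 y.
Proof.
move=> hxy hy; case: hs => _ [_ step].
have := step (index x s) (idx_lt x) x; rewrite nth_index ?s_all //.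
case=> _; apply; rewrite /available; apply/andP; split.
  by rewrite in_take ?s_all // -leqNgt ltnW.
case: y.2 hy => /= hy //; rewrite in_take ?s_all //; exact: hy.
Qed.

Lemma test_first j : (index (j, false) s < index (j, true) s)%N.
Proof.
case: hs => _ [_ step].
have := step (index (j, true) s) (idx_lt _) (j, true); rewrite nth_index ?s_all //.
case=> /andP [_ /= h] _.
by rewrite in_take ?s_all // in h.
Qed.

Definition X (i j : 'I_n) : R :=
  (if (index (i, false) s <= index (j, true) s)%N then t i else 0) +
  (if (index (i, true) s <= index (j, true) s)%N then p i else 0).

Lemma run_cost_X : run_cost t p s = \sum_j \sum_i X i j.
Proof.
rewrite /run_cost; apply: eq_bigr => j _; rewrite /run_completion.
case: hs => us [_ _].
rewrite big_uniq ?take_uniq //=.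
rewrite (eq_bigl (fun o => (index o s <= index (j, true) s)%N)); last first.
  by move=> o; rewrite in_take ?s_all // ltnS.
rewrite big_mkcond /= -(pair_bigA _ (fun i b => if (index (i, b) s <= index (j, true) s)%N then dur t p (i, b) else 0)) /=.
by apply: eq_bigr => i _; rewrite big_bool /= /X /dur /= addrC.
Qed.

Lemma X_diag i : X i i = t i + p i.
Proof. by rewrite /X leqnn (ltnW (test_first i)). Qed.

Ltac mins := repeat match goal with
  | |- context[Num.min ?x ?y] => let H := fresh "H" in let E := fresh "E" in
      (have [[H E]|[H E]] : (x <= y /\ Num.min x y = x) \/ (y < x /\ Num.min x y = y)
        by rewrite minEle; case: leP => h; [left|right]); rewrite E; clear E
  end.

Lemma X_pair i j : (index (i, false) s < index (j, false) s)%N ->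
  X i j + X j i <= Num.min (t i) (t j) + Num.min (p i) (p j) + Num.min (t j) (p i).
Proof.
move=> hF.
have hi := test_first i; have hj := test_first j.
have ha : t i <= t j by have := prio_le (i, false) (j, false) hF ; rewrite /prio /= !mul1r; apply.
have nTF : index (i, true) s <> index (j, false) s by move=> /idx_inj.
have nTT : index (i, true) s <> index (j, true) s by move=> /idx_inj [] eij; move: hF; rewrite eij ltnn.
have hFT : (index (i, false) s < index (j, true) s)%N by lia.
rewrite /X (ltnW hFT).
set Fi := index (i, false) s in hF hi hFT *; set Ti := index (i, true) s in hi nTF nTT *.
set Fj := index (j, false) s in hF hj nTF hFT *; set Tj := index (j, true) s in hj nTT hFT *.
have [hTF|hTF] := ltnP (index (i, true) s) (index (j, false) s).
  have hb : p i <= t j.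
    by have := prio_le (i, true) (j, false) hTF ; rewrite /prio /= ?mul1r; apply.
  have hpi := hp i; have hpj := hp j; repeat (case: ifP => ?); (try lia); mins; lra.
have hTF' : (index (j, false) s < index (i, true) s)%N by lia.
have hc : t j <= p i.
  by have := prio_le (j, false) (i, true) hTF' ; rewrite /prio /= ?mul1r; apply.

have [hTT|hTT] := ltnP (index (i, true) s) (index (j, true) s).
  have hd : p i <= p j.
    by have := prio_le (i, true) (j, true) hTT; rewrite /prio /=; apply.

  have hpi := hp i; have hpj := hp j; have hti := ht i; repeat (case: ifP => ?); (try lia); mins; lra.
have hTT' : (index (j, true) s < index (i, true) s)%N by lia.
have he : p j <= p i.
  by have := prio_le (j, true) (i, true) hTT'; rewrite /prio /= => h; apply: h => _; exact: hFT.

have hpi := hp i; have hpj := hp j; have hti := ht i; repeat (case: ifP => ?); (try lia); mins; lra.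
Qed.
End Alg.
Ltac mins2 := repeat match goal with
  | |- context[Num.max ?x ?y] => let H := fresh "H" in let E := fresh "E" in
      (have [[H E]|[H E]] : (x <= y /\ Num.max x y = y) \/ (y < x /\ Num.max x y = x)
        by rewrite maxEle; case: leP => h; [left|right]); rewrite E; clear E
  | |- context[Num.min ?x ?y] => let H := fresh "H" in let E := fresh "E" in
      (have [[H E]|[H E]] : (x <= y /\ Num.min x y = x) \/ (y < x /\ Num.min x y = y)
        by rewrite minEle; case: leP => h; [left|right]); rewrite E; clear E
  end.

Section Opt.
Variables (R : realType) (n : nat) (t p : 'I_n -> R) (S : op n -> R).
Hypothesis ht : forall j, 0 <= t j.
Hypothesis hp : forall j, 0 <= p j.
Hypothesis hS : feasible_schedule t p S.

Lemma dur_ge0 o : 0 <= dur t p o.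
Proof. by case: o => i [] /=; rewrite /dur /=. Qed.

Lemma pack_pos k : forall (A : {set op n}) (Cb : R), (#|A| <= k)%N -> 0 <= Cb ->
  (forall o, o \in A -> 0 < dur t p o /\ 0 <= S o /\ S o + dur t p o <= Cb) ->
  \sum_(o in A) dur t p o <= Cb.
Proof.
elim: k => [|k IH] A Cb hk hC hA.
  by move: hk; rewrite leqn0 cards_eq0 => /eqP ->; rewrite big_set0.
case: (set_0Vmem A) => [->|[x0 hx0]]; first by rewrite big_set0.
have [x hx hmax] := @arg_maxP _ _ _ x0 (fun o => o \in A) S hx0.
rewrite (big_setD1 x hx) /=.
have [hdx [hSx hxC]] := hA x hx.
have IH' : \sum_(o in A :\ x) dur t p o <= S x.
  apply: IH => //.
    by move: hk; rewrite (cardsD1 x A) hx.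
  move=> y; rewrite !inE => /andP [hyx hy].
  have [hdy [hSy _]] := hA y hy.
  split => //; split => //.
  have hyx' : S y <= S x := hmax y hy.
  case: hS => _ [_ hdis].
  by case: (hdis y x hyx) => h; lra.
lra.
Qed.

Lemma pack (A : {set op n}) (Cb : R) : 0 <= Cb ->
  (forall o, o \in A -> 0 <= S o /\ S o + dur t p o <= Cb) ->
  \sum_(o in A) dur t p o <= Cb.
Proof.
move=> hC hA.
rewrite (bigID (fun o => 0 < dur t p o)) /=.
rewrite [X in _ + X]big1 ?addr0; last first.
  move=> o /andP [_ h]; apply/eqP; rewrite eq_le dur_ge0 andbT.
  by rewrite leNgt.
rewrite (eq_bigl (fun o => o \in [set o in A | 0 < dur t p o])); last first.
  by move=> o; rewrite inE.
apply: (@pack_pos #|[set o in A | 0 < dur t p o]| [set o in A | 0 < dur t p o] Cb (leqnn _)) => // o; rewrite inE => /andP [hoA hpos].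
by have [h1 h2] := hA o hoA.
Qed.

Lemma sum_op (F : op n -> R) : \sum_o F o = \sum_i \sum_(b : bool) F (i, b).
Proof. by rewrite pair_bigA; apply: eq_bigr => -[i b]. Qed.

Definition Cc (j : 'I_n) := S (j, true) + p j.

Lemma Cc_ge0 j : 0 <= Cc j.
Proof. case: hS => h0 _; have := h0 (j, true); have := hp j; rewrite /Cc; lra. Qed.

Lemma pack_job j : \sum_i (if Cc i <= Cc j then t i + p i else 0) <= Cc j.
Proof.
have := @pack [set o : op n | Cc o.1 <= Cc j] (Cc j) (Cc_ge0 j).
rewrite big_mkcond /= sum_op.
have -> : \sum_i \sum_(b : bool) (if (i, b) \in [set o : op n | Cc o.1 <= Cc j] then dur t p (i, b) else 0)
   = \sum_i (if Cc i <= Cc j then t i + p i else 0).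
  apply: eq_bigr => i _; rewrite big_bool /= !inE /dur /=.
  by case: ifP => _; rewrite ?addr0 // addrC.
apply => -[i b]; rewrite inE /= => hij.
case: hS => h0 [h1 _]; split; first exact: h0.
case: b; rewrite /dur /=; first by move: hij; rewrite /Cc.
have := h1 i; have := hp i; move: hij; rewrite /Cc; lra.
Qed.

Lemma K_le {ti pi tj pj : R} : 0 <= ti -> 0 <= pi -> 0 <= tj -> 0 <= pj ->
  3/4 * (Num.min ti tj + Num.min pi pj) + 1/4 * Num.min (Num.max ti pi) (Num.max tj pj)
  <= ti + pi.
Proof. move=> *; mins2; lra. Qed.

Lemma opt_lb : Rf R n t p <= 2 * schedule_cost p S.
Proof.
set Y := fun i j => if Cc i <= Cc j then t i + p i else 0.
have E : 2 * schedule_cost p S >= \sum_j \sum_i (Y i j + Y j i).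
  have E2 : \sum_j \sum_i (Y i j + Y j i) = 2 * \sum_j \sum_i Y i j.
    rewrite (eq_bigr (fun j => \sum_i Y i j + \sum_i Y j i)); last by move=> j _; rewrite big_split.
    rewrite big_split /= [X in _ + X]exchange_big /=; ring.
  rewrite E2; apply: ler_wpM2l => //.
  rewrite /schedule_cost; apply: ler_sum => j _; exact: pack_job.
apply: le_trans E; rewrite /Rf.
rewrite -(sum_diag R n (fun i => t i + p i)) -big_split /=; apply: ler_sum => i _.
rewrite -big_split /=; apply: ler_sum => j _.
have [<-|nij] := eqVneq i j.
  rewrite /Y lexx !minxx /= mulr1n mul1r.
  have := ht i; have := hp i; mins2; lra.
rewrite /= mulr0n mul0r add0r /Y.
have hi := K_le (ht i) (hp i) (ht j) (hp j).
have hj := K_le (ht j) (hp j) (ht i) (hp i).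
rewrite [Num.min (t j) _]minC [Num.min (p j) _]minC [Num.min (Num.max (t j) _) _]minC in hj.
have ti0 := ht i; have pi0 := hp i; have tj0 := ht j; have pj0 := hp j.
case: (lerP (Cc i) (Cc j)) => h1; case: (lerP (Cc j) (Cc i)) => h2; lra.
Qed.

End Opt.
Lemma alg_ub (R : realType) (n : nat) (t p : 'I_n -> R) (s : seq (op n))
  (hs : beta_sort_run t p 1 s) (ht : forall j, 0 <= t j) (hp : forall j, 0 <= p j) :
  2 * run_cost t p s <= Lf R n (fun i j => (index (i, false) s < index (j, false) s)%N) t p.
Proof.
set lo := fun i j : 'I_n => (index (i, false) s < index (j, false) s)%N.
rewrite (run_cost_X R n t p s hs).
have D2 : forall H1 H2 : 'I_n -> 'I_n -> R,
    \sum_i \sum_j (H1 i j + H2 i j) = \sum_i \sum_j H1 i j + \sum_i \sum_j H2 i j.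
  by move=> H1 H2; rewrite -big_split /=; apply: eq_bigr => i _; rewrite big_split.
have E2 : 2 * \sum_j \sum_i X R n t p s i j = \sum_i \sum_j (X R n t p s i j + X R n t p s j i).
  rewrite D2 [X in _ = X + _]exchange_big /=; ring.
have sym : forall F G : 'I_n -> 'I_n -> R,
    \sum_i \sum_j (F i j + 2 * G i j) = \sum_i \sum_j (F i j + (G i j + G j i)).
  move=> F G.
  rewrite !D2 [X in _ = _ + (_ + X)]exchange_big /=.
  have -> : \sum_i \sum_j 2 * G i j = 2 * \sum_i \sum_j G i j.
    by rewrite mulr_sumr; apply: eq_bigr => i _; rewrite mulr_sumr.
  ring.
rewrite E2 /Lf (sym (fun i j => Num.min (t i) (t j) + Num.min (p i) (p j))
   (fun i j => (lo i j)%:R * Num.min (t j) (p i))).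
rewrite -(sum_diag R n (fun i => t i + p i)) -big_split /=; apply: ler_sum => i _.
rewrite -big_split /=; apply: ler_sum => j _.
have [<-|nij] := eqVneq i j.
  rewrite /lo ltnn /= mulr1n mul1r mul0r !addr0 !minxx (X_diag R n t p s hs).
  lra.
rewrite /= mulr0n mul0r add0r.
have [hij|hji|e] := ltngtP (index (i, false) s) (index (j, false) s).
- have hji : lo j i = false by rewrite /lo; apply/negbTE; rewrite -leqNgt ltnW.
  rewrite hji /lo hij /= mulr1n mul1r mul0r addr0.
  exact: (X_pair R n t p s hs ht hp i j hij).
- have hij' : lo i j = false by rewrite /lo; apply/negbTE; rewrite -leqNgt ltnW.
  rewrite hij' /lo hji /= mulr1n mul1r mul0r add0r.
  have := X_pair R n t p s hs ht hp j i hji.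
  by rewrite addrC [Num.min (t j) _]minC [Num.min (p j) _]minC.
- have := idx_inj R n t p s hs (i, false) (j, false) e => -[eij].
  by rewrite eij eqxx in nij.
Qed.

Theorem theorem1 (R : realType) (mu nu : R)
  (hmu : 1 < mu) (hnu0 : 0 < nu) (hnu1 : nu < 1) (hmunu : 1 < mu * nu)
  (hcond : 1 + 1 / mu <= nu + nu ^+ 2)
  (n : nat) (t p : 'I_n -> R)
  (ht : forall j, 0 <= t j) (hp : forall j, 0 <= p j)
  (s : seq (op n)) (hs : beta_sort_run t p 1 s)
  (S : op n -> R) (hS : feasible_schedule t p S) :
  run_cost t p s <= rho mu nu * schedule_cost p S.
Proof.
set lo := fun i j : 'I_n => (index (i, false) s < index (j, false) s)%N.
have lo_irr : forall i, lo i i = false by move=> i; rewrite /lo ltnn.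
have lo_asym : forall i j, lo i j -> lo j i = false.
  by move=> i j; rewrite /lo => h; apply/negbTE; rewrite -leqNgt ltnW.
have h1 := alg_ub R n t p s hs ht hp.
have h2 := core_ind R n lo lo_irr lo_asym _ t p (leqnn _) ht hp.
have h3 := opt_lb R n t p S ht hp hS.
have h4 := rho_ge R mu nu hmu hnu0.
have h5 : 0 <= schedule_cost p S.
  apply: sumr_ge0 => j _; case: hS => h0 _; have := h0 (j, true); have := hp j; lra.
have h6 : run_cost t p s <= 46/25 * schedule_cost p S.
  rewrite -/lo in h1; lra.
apply: (le_trans h6); apply: ler_wpM2r => //.
Qed.
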